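(* Let $\kappa$ be an uncountable cardinal, let $X$ be a set of cardinality at least $\kappa$, let $\Gamma$ be the group of all permutations of $X$ acting by application, and let $I_\kappa$ be the ideal of subsets of $X$ of cardinality less than $\kappa$. Then $\Gamma\curvearrowright X, I_\kappa$ has cofinal orbits if and only if $\kappa$ is a successor cardinal.
   Context: For a group $\Gamma$ acting on $X$ and a $\Gamma$-invariant ideal $I$ on $X$ containing all singletons, and $a\subseteq X$, $\mathrm{pstab}(a)=\{\gamma\in\Gamma:\gamma\cdot x=x\ \forall x\in a\}$. For $a,b\in I$, $b$ is $a$-large if for every $c\in I$ there is $\gamma\in\mathrm{pstab}(a)$ with $c\subseteq\gamma\cdot b$, where $\gamma\cdot b=\{\gamma\cdot x:x\in b\}$. The dynamical ideal has cofinal orbits if for every $a\in I$ there is an $a$-large $b\in I$. *)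

(* Defs.v *)
From mathcomp Require Import all_boot.
From mathcomp Require Import boolp classical_sets functions cardinality.
Set Implicit Arguments. Unset Strict Implicit. Unset Printing Implicit Defensive.
Local Open Scope classical_set_scope.
Local Open Scope card_scope.

Definition card_lt T U (A : set T) (B : set U) : Prop := A #<= B /\ ~ (B #<= A).

(* The cardinal kappa is represented by a type K with |K| = kappa. *)
Definition uncountable_card (K : Type) : Prop := ~ countable [set: K].

(* kappa is a successor cardinal: kappa = lambda^+ for some cardinal lambda,
   i.e. among the cardinals below kappa (all realised by subsets of K)
   there is a largest one. *)
Definition successor_card (K : Type) : Prop :=
  exists L : set K, card_lt L [set: K] /\
    forall M : set K, card_lt M [set: K] -> M #<= L.

Definition Sym (X : Type) : set (X -> X) := [set g | bijective g].
Arguments Sym {X}.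

Definition pstab (X : Type) (a : set X) : set (X -> X) :=
  [set g | Sym g /\ forall x, a x -> g x = x].

Definition I_kappa (K X : Type) : set (set X) := [set A | card_lt A [set: K]].
Arguments I_kappa K X : clear implicits.

Definition large (K : Type) {X : Type} (a b : set X) : Prop :=
  forall c, I_kappa K X c -> exists2 g, pstab a g & c `<=` g @` b.

Definition cofinal_orbits (K X : Type) : Prop :=
  forall a, I_kappa K X a -> exists2 b, I_kappa K X b & large K a b.

(* Main.v *)
Require Import Defs.
From mathcomp Require Import all_boot.
From mathcomp Require Import boolp classical_sets functions cardinality.
From mathcomp Require Import zify.
Set Implicit Arguments. Unset Strict Implicit. Unset Printing Implicit Defensive.
Local Open Scope classical_set_scope.
Local Open Scope card_scope.

Definition inj_on {T U} (A : set T) (B : set U) (f : T -> U) :=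
  (forall x, A x -> B (f x)) /\ (forall x y, A x -> A y -> f x = f y -> x = y).

Lemma inj_le T U (A : set T) (B : set U) f : inj_on A B f -> A #<= B.
Proof.
move=> [fAB finj].
have : $|{injfun A >-> B}|.
  apply/injfunPex; exists f => //.
  by move=> x y; rewrite !inE => Ax Ay; apply: finj.
by case=> g; apply: inj_card_le g.
Qed.

Lemma le_inj T U (u0 : U) (A : set T) (B : set U) :
  A #<= B -> exists f, inj_on A B f.
Proof.
elim/Ppointed: U => U in u0 B *; first by case: (no u0).
move/pcard_leP => [g].
have [f fAB finj] : exists2 f : T -> U, set_fun A B f & set_inj A f.
  by apply/injfunPex; squash g.
by exists f; split => // x y Ax Ay; apply: finj; rewrite inE.
Qed.

Lemma set0_or T (A : set T) : A = set0 \/ exists a, A a.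
Proof.
case: (pselect (exists a, A a)) => [h|nA]; [by right|left].
by apply/seteqP; split => x // Ax; case: nA; exists x.
Qed.

Lemma graph_inj T U (A : set T) (B : set U) (G : set (T * U)) :
  (forall p, G p -> A p.1 /\ B p.2) ->
  (forall p q, G p -> G q -> (p.1 = q.1 <-> p.2 = q.2)) ->
  (forall a, A a -> exists b, G (a, b)) -> A #<= B.
Proof.
move=> GAB Gfun Hdom.
have [->|[a0 Aa0]] := set0_or A; first exact: card_ge0.
have [b0 _] := Hdom a0 Aa0.
pose f a := if pselect (exists b, G (a,b)) is left h then projT1 (cid h) else b0.
have fG : forall a, A a -> G (a, f a).
  move=> a Aa; rewrite /f; case: pselect => [h|[]]; last exact: Hdom.
  exact: (projT2 (cid h)).
apply: (@inj_le _ _ _ _ f); split.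
  by move=> a Aa; have /GAB[] := fG a Aa.
by move=> x y Ax Ay fxy; apply/(Gfun _ _ (fG x Ax) (fG y Ay)).
Qed.

Lemma card_total T U (A : set T) (B : set U) : A #<= B \/ B #<= A.
Proof.
pose P := [set G : set (T*U) | (forall p, G p -> A p.1 /\ B p.2) /\
   (forall p q, G p -> G q -> (p.1 = q.1 <-> p.2 = q.2))].
have [|G [[GAB Gfun] Gmax]] := Zorn_bigcup (P:=P).
  move=> F FP Ftot; split.
    by move=> p [G FG Gp]; exact: (FP G FG).1 p Gp.
  move=> p q [G1 F1 G1p] [G2 F2 G2q]; have [s12|s21] := Ftot _ _ F1 F2.
    exact: (FP _ F2).2 p q (s12 _ G1p) G2q.
  exact: (FP _ F1).2 p q G1p (s21 _ G2q).
case: (pselect (forall a, A a -> exists b, G (a,b))) => [Hdom|].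
  by left; apply: graph_inj GAB Gfun Hdom.
move/existsNP => [a /not_implyP [Aa na]].
case: (pselect (forall b, B b -> exists a, G (a,b))) => [Hran|].
  right; apply: (@graph_inj _ _ _ _ [set p | G (p.2, p.1)]).
  - by move=> [x y] /GAB [].
  - by move=> [x y] [x' y'] /= h1 h2; split => e; apply/(Gfun _ _ h1 h2).
  - by move=> b Bb; have [x h] := Hran b Bb; exists x.
move/existsNP => [b /not_implyP [Bb nb]].
exfalso; apply: (Gmax (G `|` [set (a, b)])).
  split; first by move=> p Gp; left.
  by move=> /(_ (a,b)) /(_ (or_intror erefl)) Gab; apply: na; exists b.
split.
  by move=> p [/GAB //|-> /=].
move=> p q [Gp|->] [Gq|->] /=.
- exact: Gfun.
- split=> e; [case: na; exists p.2; rewrite -e; case: p Gp {e} => //|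
              case: nb; exists p.1; rewrite -e; case: p Gp {e} => //].
- split=> e; [case: na; exists q.2; rewrite e; case: q Gq {e} => //|
              case: nb; exists q.1; rewrite e; case: q Gq {e} => //].
- by [].
Qed.

Lemma absorb_finite U (L S : set U) (k : nat) (e : nat -> U) (idx : U -> nat) :
  inj_on setT S e -> inj_on (L `\` S) `I_k idx -> S `<=` L ->
  exists psi, inj_on L S psi.
Proof.
move=> [eS einj] [idxk idxinj] SL.
pose psi y := match pselect ((L `\` S) y) with left _ => e (idx y)
  | right _ => match pselect (exists n, y = e n) with
     left h => e (k + projT1 (cid h))%N | right _ => y end end.
exists psi; split.
  move=> y Ly; rewrite /psi; case: (pselect ((L `\` S) y)) => [hF|nF]; first exact: eS.
  case: (pselect (exists n, y = e n)) => [h|nh]; first exact: eS.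
  by case: (pselect (S y)) => // nS; case: nF; split.
have eI : forall n m, e n = e m -> n = m by move=> n m; apply: einj.
move=> x y Lx Ly; rewrite /psi.
case: (pselect ((L `\` S) x)) => [Fx|nFx]; case: (pselect ((L `\` S) y)) => [Fy|nFy].
- by move/eI => h; apply: idxinj.
- case: (pselect (exists n, y = e n)) => [hm|ny] /=.
    move/eI => h; have := idxk _ Fx; rewrite /= h.
    by rewrite ltnNge leq_addr.
  by move=> exy; case: ny; exists (idx x).
- case: (pselect (exists n, x = e n)) => [hm|ny] /=.
    move/eI => h; have := idxk _ Fy; rewrite /= -h.
    by rewrite ltnNge leq_addr.
  by move=> exy; case: ny; exists (idx y).
- case: (pselect (exists n, x = e n)) => [hx|nx];
  case: (pselect (exists n, y = e n)) => [hy|ny].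
  + move/eI => /eqP; rewrite eqn_add2l => /eqP h.
    by rewrite (projT2 (cid hx)) (projT2 (cid hy)) h.
  + by move=> exy; case: ny; exists (k + projT1 (cid hx))%N.
  + by move=> exy; case: nx; exists (k + projT1 (cid hy))%N.
  + by [].
Qed.

Lemma dbl_inj U (L : set U) : [set: nat] #<= L ->
  exists h : U * bool -> U, inj_on [set p | L p.1] L h.
Proof.
move=> natL.
have [L0|[u0 Lu0]] := set0_or L.
  by move: natL; rewrite L0 => /card_le0P /(congr1 (fun A => A 0%N)) => /= E;
     exfalso; rewrite -E.
pose P := [set G : set ((U * bool) * U) |
  [/\ (forall p, G p -> L p.1.1 /\ L p.2),
      (forall p q, G p -> G q -> (p.1 = q.1 <-> p.2 = q.2)) &
      (forall u b, (exists y, G ((u,b),y)) <-> (exists p, G (p,u)))]].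
have [|G [[GL Gfun Gdom] Gmax]] := Zorn_bigcup (P:=P).
  move=> F FP Ftot; split.
  - by move=> p [G FG Gp]; have [] := FP G FG; move=> h _ _; apply: h.
  - move=> p q [G1 F1 G1p] [G2 F2 G2q]; have [s12|s21] := Ftot _ _ F1 F2.
      by have [_ h _] := FP _ F2; apply: h (s12 _ G1p) G2q.
    by have [_ h _] := FP _ F1; apply: h G1p (s21 _ G2q).
  - move=> u b; split.
      move=> [y [G FG Gy]]; have [_ _ h] := FP _ FG.
      by have [p Gp] := (h u b).1 (ex_intro _ y Gy); exists p; exists G.
    move=> [p [G FG Gp]]; have [_ _ h] := FP _ FG.
    by have [y Gy] := (h u b).2 (ex_intro _ p Gp); exists y; exists G.
pose S := [set u | exists p, G (p, u)].
have SG : forall p y, G (p, y) -> S p.1 /\ S y.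
  move=> [u b] y Gp; split; last by exists (u,b).
  by apply/(Gdom u b).1; exists y.
have SL : S `<=` L by move=> u [p /GL []].
have finF : finite_set (L `\` S).
  case: (pselect (finite_set (L `\` S))) => // /infiniteP nF; exfalso.
  have [e [eF einj]] := le_inj u0 nF.
  have eI : forall n m, e n = e m -> n = m by move=> n m; apply: einj.
  have eS : forall n, ~ S (e n) by move=> n; have [] := eF n I.
  pose G' := G `|` [set q | exists n (b : bool), q = ((e n, b), e (2 * n + b)%N)].
  apply: (Gmax G').
    split; first by move=> p Gp; left.
    move=> /(_ ((e 0, true), e 1%N)) h.
    have /h : G' ((e 0, true), e 1%N) by right; exists 0%N, true.
    by move=> /SG [/= /eS].
  split.
  - move=> p [/GL //|[n [b ->]]] /=.
    by split; [have [] := eF n I | have [] := eF (2 * n + b)%N I].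
  - move=> [p1 p2] [q1 q2] [Gp|[n [b [-> ->]]]] [Gq|[m [c [-> ->]]]] /=.
    + exact: (Gfun _ _ Gp Gq).
    + have [Sp1 Sp2] := SG _ _ Gp.
      split=> E; exfalso; [apply: (eS m); move: Sp1; rewrite E //
                          | apply: (eS (2 * m + c)%N); rewrite -E //].
    + have [Sq1 Sq2] := SG _ _ Gq.
      split=> E; exfalso; [apply: (eS n); move: Sq1; rewrite -E //
                          | apply: (eS (2 * n + b)%N); rewrite E //].
    + split.
        by case=> /eI -> ->.
      move/eI => E; suff [-> ->] : n = m /\ b = c by [].
      by case: b c E => [] [] /=; lia.
  - move=> u b; split.
    + move=> [y [Gy|[n [c E]]]].
        by have [p Gp] := (Gdom u b).1 (ex_intro _ y Gy); exists p; left.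
      case: E => -> _ _.
      exists (e n./2, odd n); right; exists n./2, (odd n).
      by congr (_, e _); rewrite addnC mul2n odd_double_half.
    + move=> [p [Gp|[n [c E]]]].
        by have [y Gy] := (Gdom u b).2 (ex_intro _ p Gp); exists y; left.
      case: E => _ ->.
      by exists (e (2 * (2 * n + c) + b)%N); right; exists (2 * n + c)%N, b.
have Sinf : ~ finite_set S.
  move=> finS; move/infiniteP: natL; apply.
  apply: (@sub_finite_set _ L (S `|` (L `\` S))); last by rewrite finite_setU.
  by move=> x Lx; case: (pselect (S x)) => h; [left|right].
have [e eS] := le_inj u0 (proj1 (infiniteP S) Sinf).
case: finF => k /card_eqPle [Fk _].
have [idx hidx] := le_inj 0%N Fk.
have [psi [psiS psiinj]] := absorb_finite eS hidx SL.
have hG : forall p, L p.1 -> exists y, G ((psi p.1, p.2), y).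
  move=> [u b] /= Lu; apply/(Gdom _ b).2; exact: psiS.
pose h p := match pselect (exists y, G ((psi p.1, p.2), y)) with
  left H => projT1 (cid H) | right _ => u0 end.
have hG' : forall p, L p.1 -> G ((psi p.1, p.2), h p).
  move=> p Lp; rewrite /h; case: pselect => [H|[]]; last exact: hG.
  exact: (projT2 (cid H)).
exists h; split.
  by move=> p Lp; have /GL [] := hG' p Lp.
move=> [x b] [y c] /= Lx Ly E.
have := (Gfun _ _ (hG' (x,b) Lx) (hG' (y,c) Ly)).2 E.
by case=> /psiinj -> // ->.
Qed.

Lemma union_le T U (A B : set T) (L : set U) : [set: nat] #<= L ->
  A #<= L -> B #<= L -> A `|` B #<= L.
Proof.
move=> natL AL BL.
have [L0|[u0 Lu0]] := set0_or L.
  by move: natL; rewrite L0 => /card_le0P /(congr1 (fun A => A 0%N)) => /= E;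
     exfalso; rewrite -E.
have [h [hL hinj]] := dbl_inj natL.
have [fA [fAL fAinj]] := le_inj u0 AL.
have [fB [fBL fBinj]] := le_inj u0 BL.
pose f x := match pselect (A x) with left _ => h (fA x, true)
  | right _ => h (fB x, false) end.
apply: (@inj_le _ _ _ _ f); split.
  move=> x ABx; rewrite /f; case: (pselect (A x)) => [Ax|nAx]; apply: hL => /=.
    exact: fAL.
  by case: ABx => // /fBL.
move=> x y ABx ABy; rewrite /f.
have hLx : forall z, (A `|` B) z -> (A z -> L (fA z)) /\ (~ A z -> L (fB z)).
  move=> z ABz; split => Az; first exact: fAL.
  by apply: fBL; case: ABz.
have [Lx1 Lx2] := hLx x ABx; have [Ly1 Ly2] := hLx y ABy.
case: (pselect (A x)) => [Ax|nAx]; case: (pselect (A y)) => [Ay|nAy] => E.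
- by have [] := hinj (fA x, true) (fA y, true) (Lx1 Ax) (Ly1 Ay) E; apply: fAinj.
- by have [] := hinj (fA x, true) (fB y, false) (Lx1 Ax) (Ly2 nAy) E.
- by have [] := hinj (fB x, false) (fA y, true) (Lx2 nAx) (Ly1 Ay) E.
- have Bx : B x by case: ABx.
  have By : B y by case: ABy.
  by have [] := hinj (fB x, false) (fB y, false) (Lx2 nAx) (Ly2 nAy) E; apply: fBinj.
Qed.

Section Swap.
Variables (X : Type) (P : set X) (s : X -> X).
Hypothesis sinj : forall x y, P x -> P y -> s x = s y -> x = y.
Hypothesis disj : forall x, P x -> ~ P (s x).

Definition sw x := match pselect (P x) with left _ => s x
  | right _ => match pselect (exists y, P y /\ s y = x) with
     left h => projT1 (cid h) | right _ => x end end.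

Lemma sw_P x : P x -> sw x = s x.
Proof. by rewrite /sw; case: (pselect (P x)). Qed.

Lemma sw_img y : P y -> sw (s y) = y.
Proof.
move=> Py; rewrite /sw; case: (pselect (P (s y))) => [hP|_]; first by case: (disj Py).
case: (pselect (exists z, P z /\ s z = s y)) => [h|[]]; last by exists y.
by have [Pz sz] := projT2 (cid h); apply: sinj.
Qed.

Lemma sw_out x : ~ P x -> ~ (exists y, P y /\ s y = x) -> sw x = x.
Proof.
move=> nP nI; rewrite /sw; case: (pselect (P x)) => // _.
by case: (pselect (exists y, P y /\ s y = x)).
Qed.

Lemma sw_invol x : sw (sw x) = x.
Proof.
case: (pselect (P x)) => [Px|nP]; first by rewrite (sw_P Px) sw_img.
case: (pselect (exists y, P y /\ s y = x)) => [[y [Py <-]]|nI].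
  by rewrite (sw_img Py) sw_P.
by rewrite !sw_out.
Qed.

Lemma sw_bij : bijective sw.
Proof. by exists sw => x; rewrite sw_invol. Qed.

End Swap.

Theorem mainTheorem6 (K X : Type) :
  uncountable_card K -> [set: K] #<= [set: X] ->
  (cofinal_orbits K X <-> successor_card K).
Proof.
move=> unc KX.
have nK0 : forall T (A : set T), A = set0 -> ~ ([set: K] #<= A).
  move=> T A -> /card_le0P E; apply: unc; rewrite E; exact: countable0.
split.
  move=> cof.
  have I0 : I_kappa K X set0.
    by split; [exact: card_ge0 | exact: nK0].
  have [b [bK nKb] lb] := cof set0 I0.
  have /card_subP [Lb Lbb _] := bK.
  have [Lbb1 Lbb2] : _ /\ _ := iffLR (card_eqPle _ _) Lbb.
  exists Lb; split.
    split; first exact: card_leT.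
    by move=> KL; apply: nKb; apply: card_le_trans KL Lbb1.
  move=> M [MK nKM].
  have MX : M #<= [set: X] := card_le_trans MK KX.
  have /card_subP [c cM _] := MX.
  have [cM1 cM2] : _ /\ _ := iffLR (card_eqPle _ _) cM.
  have Ic : I_kappa K X c.
    split; first exact: card_le_trans cM1 MK.
    by move=> Kc; apply: nKM; apply: card_le_trans Kc cM1.
  have [g _ cg] := lb c Ic.
  apply: card_le_trans cM2 _; apply: card_le_trans (subset_card_le cg) _.
  apply: card_le_trans (card_image_le _ _) _; exact: Lbb2.
move=> [L [[LK nKL] Lmax]].
have toL : forall A : set X, card_lt A [set: K] -> A #<= L.
  move=> A [AK nKA]; have /card_subP [M MA _] := AK.
  have [MA1 MA2] : _ /\ _ := iffLR (card_eqPle _ _) MA.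
  apply: card_le_trans MA2 _; apply: Lmax; split; first exact: card_leT.
  by move=> KM; apply: nKA; exact: card_le_trans KM MA1.
have fromL : forall A : set X, A #<= L -> card_lt A [set: K].
  move=> A AL; split; first exact: card_le_trans AL LK.
  by move=> KA; apply: nKL; exact: card_le_trans KA AL.
have natL : [set: nat] #<= L.
  have [natK|Knat] := card_total [set: nat] [set: K]; last by case: unc.
  have /card_subP [N Nn _] := natK.
  have [Nn1 Nn2] : _ /\ _ := iffLR (card_eqPle _ _) Nn.
  apply: card_le_trans Nn2 _; apply: Lmax; split; first exact: card_leT.
  by move=> KN; apply: unc; exact: card_le_trans KN Nn1.
have compl : forall S : set X, S #<= L -> L #<= ~` S.
  move=> S SL; have [//|cL] := card_total L (~` S).
  exfalso; apply: nKL; apply: card_le_trans KX _.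
  rewrite -(setUv S); exact: union_le natL SL cL.
have [X0|[x0 _]] := set0_or [set: X]; first by case: (nK0 _ _ X0 KX).
move=> a Ia.
have aL := toL a Ia.
have /card_subP [D DL Dsub] := compl a aL.
have [DL1 DL2] : _ /\ _ := iffLR (card_eqPle _ _) DL.
exists (a `|` D); first by apply: fromL; exact: union_le natL aL DL1.
move=> c Ic; have cL := toL c Ic.
pose S := a `|` D `|` c.
have SL : S #<= L by apply: union_le => //; apply: union_le.
have [sig [sigS siginj]] := le_inj x0 (card_le_trans DL1 (compl S SL)).
pose c' := c `\` a.
have c'L : c' #<= L := card_le_trans (subset_card_le (@subDsetl _ c a)) cL.
have [t0 [t0D t0inj]] := le_inj x0 (card_le_trans c'L DL2).
pose t := sig \o t0.
have tS : forall x, c' x -> ~ S (t x) by move=> x /t0D /sigS.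
have sigS' : forall x, D x -> ~ S (sig x) by move=> x /sigS.
have g1inj : forall x y, D x -> D y -> sig x = sig y -> x = y by [].
have g1disj : forall x, D x -> ~ D (sig x).
  by move=> x Dx Dsx; apply: (sigS' x Dx); left; right.
have g2inj : forall x y, c' x -> c' y -> t x = t y -> x = y.
  move=> x y cx cy E; apply: t0inj => //; apply: siginj => //; exact: t0D.
have g2disj : forall x, c' x -> ~ c' (t x).
  by move=> x cx [ctx _]; apply: (tS x cx); right.
pose g1 := sw D sig. pose g2 := sw c' t.
have fixa : forall x, a x -> g2 (g1 x) = x.
  move=> x ax; rewrite /g1 /g2 (@sw_out _ D sig x); last first.
  - by move=> [y [Dy E]]; apply: (sigS' y Dy); rewrite E; left; left.
  - by move=> /Dsub.
  rewrite sw_out //; first by case.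
  by move=> [y [cy E]]; apply: (tS y cy); rewrite E; left; left.
exists (g2 \o g1).
  split; last exact: fixa.
  exact: bij_comp (sw_bij g2inj g2disj) (sw_bij g1inj g1disj).
move=> x cx.
case: (pselect (a x)) => [ax|nax].
  by exists x; [left | exact: fixa].
have c'x : c' x by split.
exists (t0 x); first by right; exact: t0D.
rewrite /= /g1 (sw_P sig (t0D x c'x)).
exact: (sw_img g2inj g2disj c'x).
Qed.
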